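(* For every integer $n \ge 2$, $$\chi_{2K_2}(P_n) \ge \sqrt{2\left\lceil \frac{n-1}{3} \right\rceil + \frac14} + \frac12.$$
   Context: All graphs are finite and simple. For a fixed bipartite graph $H$, a proper vertex coloring of a graph $G$ is called an $H$-avoiding coloring if for any two color classes, the subgraph of $G$ induced by their union contains no induced subgraph isomorphic to $H$. $\chi_H(G)$ denotes the minimum number of colors in an $H$-avoiding coloring of $G$. $P_n$ is the path on $n$ vertices and $2K_2$ is the disjoint union of two edges. *)

(* Defs.v *)
From mathcomp Require Import all_boot all_order all_algebra.
Set Implicit Arguments. Unset Strict Implicit. Unset Printing Implicit Defensive.

(* A simple graph is a symmetric irreflexive relation e : rel T on a finType T. *)

Definition path_graph (n : nat) : rel 'I_n :=
  fun i j => (i.+1 == j :> nat) || (j.+1 == i :> nat).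

Arguments path_graph n : clear implicits.

Definition twoK2 : rel 'I_4 :=
  fun u v => [|| (u == 0 :> nat) && (v == 1 :> nat), (u == 1 :> nat) && (v == 0 :> nat),
                 (u == 2 :> nat) && (v == 3 :> nat) | (u == 3 :> nat) && (v == 2 :> nat)].

Definition proper_coloring (T : finType) (e : rel T) (k : nat) (c : {ffun T -> 'I_k}) : bool :=
  [forall x, forall y, e x y ==> (c x != c y)].

Definition has_induced_copy (H : finType) (eH : rel H) (T : finType) (e : rel T)
    (S : pred T) : bool :=
  [exists f : {ffun H -> T},
     [&& injectiveb f, [forall u, f u \in S]
       & [forall u, forall v, eH u v == e (f u) (f v)]]].

Definition H_avoiding (H : finType) (eH : rel H) (T : finType) (e : rel T)
    (k : nat) (c : {ffun T -> 'I_k}) : bool :=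
  proper_coloring e c &&
  [forall i : 'I_k, forall j : 'I_k,
     (i != j) ==> ~~ has_induced_copy eH e [pred x | (c x == i) || (c x == j)]].

Definition has_H_avoiding_coloring (H : finType) (eH : rel H) (T : finType) (e : rel T)
    (k : nat) : bool :=
  [exists c : {ffun T -> 'I_k}, H_avoiding eH e c].

(* chi_H(G): the least k admitting an H-avoiding coloring with k colors,
   found by searching k = 0, 1, ..., #|T| (find returns the index, which equals k
   since the list starts at 0).  For H = 2K_2 an injective coloring with #|T|
   colors is always H-avoiding, so the search always succeeds and this is the
   true minimum. *)
Definition chi_H (H : finType) (eH : rel H) (T : finType) (e : rel T) : nat :=
  find (has_H_avoiding_coloring eH e) (iota 0 #|T|.+1).

(* Main.v *)
Require Import Defs.
From mathcomp Require Import all_boot all_order all_algebra.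
From mathcomp Require Import zify ring lra.
Import Order.TTheory GRing.Theory Num.Theory.

Section S.
Variables (m k : nat) (c : {ffun 'I_m.+2 -> 'I_k}).
Hypothesis Hc : H_avoiding twoK2 (path_graph m.+2) c.

Definition V (i : nat) : 'I_m.+2 := inord i.

Lemma Vval i : i <= m.+1 -> nat_of_ord (V i) = i.
Proof. by move=> h; rewrite /V inordK. Qed.

Lemma proper_edge a : a <= m -> c (V a) != c (V a.+1).
Proof.
move=> ha; move: Hc => /andP[Hp _].
have := forallP (forallP Hp (V a)) (V a.+1).
move=> /implyP; apply; rewrite /path_graph !Vval ?eqxx //; lia.
Qed.

Lemma key a b : a.+3 <= b -> b <= m ->
  (c (V a) = c (V b) /\ c (V a.+1) = c (V b.+1)) \/
  (c (V a) = c (V b.+1) /\ c (V a.+1) = c (V b)) -> False.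
Proof.
move=> hab hb Hs.
have ne : c (V a) != c (V a.+1) by apply: proper_edge; lia.
move: Hc => /andP[_ /forallP Hav].
have := forallP (Hav (c (V a))) (c (V a.+1)).
rewrite ne /= => /negP; apply.
pose g (u : nat) := if u == 0 then a else if u == 1 then a.+1 else if u == 2 then b else b.+1.
have gle : forall u, g u < m.+2.
  by move=> u; rewrite /g; case: ifP => _; [|case: ifP => _; [|case: ifP]]; lia.
pose f := [ffun u : 'I_4 => (inord (g u) : 'I_m.+2)].
have fv : forall u, val (f u) = g u by move=> u; rewrite ffunE /= inordK.
apply/existsP; exists f; apply/and3P; split.
- apply/injectiveP => u v /(congr1 val); rewrite !fv.
  case: u => [[|[|[|[|u]]]] hu] //; case: v => [[|[|[|[|v]]]] hv] //; rewrite /g /= => h;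
   try (apply: val_inj => /=; lia).
- apply/forallP => u; rewrite inE.
  have -> : f u = V (g u) by apply: val_inj; rewrite fv /V /= inordK.
  case: u => [[|[|[|[|u]]]] hu] //; rewrite /g /= ?eqxx ?orbT //;
  case: Hs => [[-> ->]|[-> ->]]; rewrite ?eqxx ?orbT //.
- apply/forallP => u; apply/forallP => v.
  rewrite /twoK2 /path_graph !fv.
  case: u => [[|[|[|[|u]]]] hu] //; case: v => [[|[|[|[|v]]]] hv] //; rewrite /g /=.
  all: by repeat (case: eqP => //= ?); lia.
Qed.

Definition same a b :=
  (c (V a) = c (V b) /\ c (V a.+1) = c (V b.+1)) \/
  (c (V a) = c (V b.+1) /\ c (V a.+1) = c (V b)).

Lemma key2 a b : a <= m -> b <= m -> same a b -> a %% 3 = b %% 3 -> a = b.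
Proof.
move=> ha hb hs hm.
have := divn_eq a 3; have := divn_eq b 3; rewrite hm => e1 e2.
case: (ltngtP a b) => // h.
- have h3 : a.+3 <= b by lia.
  by case: (key _ _ h3 hb hs).
- have h3 : b.+3 <= a by lia.
  case: (key _ _ h3 ha).
  by case: hs => [[-> ->]|[-> ->]]; [left|right].
Qed.

Definition r3 (e : nat) : 'I_3 := Ordinal (ltn_pmod e (isT : 0 < 3)).

Definition F (s : (bool * 'I_m.+1) + ('I_k * 'I_3)) : 'I_k * 'I_k * 'I_3 :=
  match s with
  | inl (b, e) => if b then (c (V e), c (V e.+1), r3 e) else (c (V e.+1), c (V e), r3 e)
  | inr (x, r) => (x, x, r)
  end.

Lemma F_inj : injective F.
Proof.
have pe : forall e : 'I_m.+1, c (V e) != c (V e.+1).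
  by move=> e; apply: proper_edge; have := ltn_ord e; lia.
have K : forall e1 e2 : 'I_m.+1, same e1 e2 -> e1 %% 3 = e2 %% 3 -> e1 = e2.
  move=> e1 e2 hs hr; apply: val_inj; apply: key2 => //; by rewrite -ltnS ltn_ord.
move=> [[[] e1]|[x1 r1]] [[[] e2]|[x2 r2]] /=; case=> h1 h2 h3.
- by rewrite (K e1 e2 (or_introl (conj h1 h2)) h3).
- have ee := K e1 e2 (or_intror (conj h1 h2)) h3.
  by move: ee h1 => -> h1; move: (pe e2); rewrite h1 eqxx.
- by move: (pe e1); rewrite h1 h2 eqxx.
- have ee := K e1 e2 (or_intror (conj h2 h1)) h3.
  by move: ee h2 => -> h2; move: (pe e2); rewrite h2 eqxx.
- by rewrite (K e1 e2 (or_introl (conj h2 h1)) h3).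
- by move: (pe e1); rewrite h1 h2 eqxx.
- by move: (pe e2); rewrite -h1 -h2 eqxx.
- by move: (pe e2); rewrite -h1 -h2 eqxx.
- by rewrite h1 h3.
Qed.

Lemma count_bound : 2 * m.+1 + k * 3 <= k * k * 3.
Proof.
have := leq_card F F_inj.
by rewrite card_sum !card_prod card_bool !card_ord.
Qed.
End S.

Lemma binfact k : k * (k - 1) = 2 * 'C(k, 2).
Proof. elim: k => // k IH; rewrite binS bin1; nia. Qed.

Local Open Scope ring_scope.

Theorem corollary1 (R : rcfType) (n : nat) (hn : (2 <= n)%N) :
  Num.sqrt (2 * (divn (n - 1 + 2)%N 3)%:R + 1 / 4 : R) + 1 / 2
    <= (chi_H twoK2 (path_graph n))%:R.
Proof.
have [hK hK1] : (2 * ((n - 1 + 2) %/ 3) <= chi_H twoK2 (path_graph n) * (chi_H twoK2 (path_graph n) - 1))%N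
   /\ (1 <= chi_H twoK2 (path_graph n))%N.
  case: n hn => [|[|m]] // _.
  rewrite /chi_H.
  set P := has_H_avoiding_coloring _ _.
  have hq := divn_eq (m.+2 - 1 + 2) 3.
  have hr := ltn_pmod (m.+2 - 1 + 2) (isT : (0 < 3)%N).
  case: (boolP (has P (iota 0 #|'I_m.+2|.+1))) => hP.
  - have := nth_find 0 hP.
    have hlt := hP; rewrite has_find size_iota in hlt.
    rewrite nth_iota // add0n.
    set k := find P _ => /existsP [c Hc].
    have := @count_bound _ _ c Hc.
    rewrite card_ord in hlt.
    have := binfact k.
    nia.
  - rewrite (hasNfind hP) size_iota card_ord.
    nia.
set K := chi_H _ _ in hK hK1 *.
set M := (_ %/ 3)%N in hK *.
have h1 : (2 * M)%:R <= (K * (K - 1))%:R :> R by rewrite ler_nat.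
rewrite !natrM natrB // in h1.
have hK1' : 1 <= K%:R :> R by rewrite ler1n.
have h0 : 0 <= 2 * M%:R + 1 / 4 :> R.
  have : 0 <= M%:R :> R by rewrite ler0n.
  lra.
have hs := sqr_sqrtr h0.
have s0 := sqrtr_ge0 (2 * M%:R + 1 / 4 : R).
set s := Num.sqrt _ in hs s0 *.

nra.
Qed.
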